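(* Let $(\mathcal C,\otimes,I)$ be a monoidal category and $M$ a strong monad on $\mathcal C$ such that for every object $A$ the algebraically free monad of the strong endofunctor $X\mapsto A\otimes MX$ exists and is strongly generated, so that the forgetful functor $U:\mathbf{EMMon}_M\to\mathcal C$ has a left adjoint $F$. Then the adjunction $F\dashv U$ is strictly monadic; consequently $\mathbf{EMMon}_M$ is isomorphic to the category of Eilenberg--Moore algebras of the monad $UF$.
   Context: A strong monad $M$ has a strength $\tau_{A,B}: MA\otimes B\to M(A\otimes B)$ satisfying the usual coherence laws. An Eilenberg--Moore $M$-monoid is $\langle A,a: MA\to A,m: A\otimes A\to A,u: I\to A\rangle$ where $\langle A,a\rangle$ is an Eilenberg--Moore $M$-algebra, $\langle A,m,u\rangle$ is a monoid, and $m\circ(a\otimes\mathrm{id}_A)=a\circ Mm\circ\tau_{A,A}$; morphisms are $\mathcal C$-morphisms that are both algebra and monoid morphisms, forming $\mathbf{EMMon}_M$, with $U$ the carrier functor. The strong endofunctor $X\mapsto A\otimes MX$ has strength $(A\otimes MX)\otimes Y\cong A\otimes(MX\otimes Y)\xrightarrow{\mathrm{id}\otimes\tau}A\otimes M(X\otimes Y)$. For a strong endofunctor $G$, the algebraically free monad $G^*$ exists if free $G$-algebras $\langle G^*X,\mathsf{cons}\rangle$ (unit $\eta^{\mathcal F}$) exist; it is strongly generated if for every $f: X\otimes Y\to C$ and $G$-algebra $\langle C,c\rangle$ there is a unique $\widehat f: G^*X\otimes Y\to C$ with $\widehat f\circ(\eta^{\mathcal F}\otimes\mathrm{id})=f$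 and $\widehat f\circ(\mathsf{cons}\otimes\mathrm{id})=c\circ G\widehat f\circ\tau^G$. An adjunction $L\dashv R:\mathcal D\to\mathcal C$ is strictly monadic if the comparison functor from $\mathcal D$ to the Eilenberg--Moore category of the induced monad $RL$, $X\mapsto\langle RX, R\epsilon_X\rangle$, is an isomorphism of categories. *)

(* Defs.v *)
From Stdlib Require Import ProofIrrelevance.

Record Category := {
  Ob :> Type;
  Hom : Ob -> Ob -> Type;
  idm : forall A : Ob, Hom A A;
  comp : forall A B D : Ob, Hom B D -> Hom A B -> Hom A D;
  comp_idl : forall A B (f : Hom A B), comp A B B (idm B) f = f;
  comp_idr : forall A B (f : Hom A B), comp A A B f (idm A) = f;
  comp_assoc : forall A B D E (h : Hom D E) (g : Hom B D) (f : Hom A B),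
      comp A D E h (comp A B D g f) = comp A B E (comp B D E h g) f
}.
Arguments Hom {_} _ _.
Arguments idm {_} _.
Arguments comp {_ _ _ _} _ _.
Arguments comp_idl {_ _ _} _.
Arguments comp_idr {_ _ _} _.
Arguments comp_assoc {_ _ _ _ _} _ _ _.

Notation "g ∘ f" := (comp g f) (at level 40, left associativity).

Record Functor (C D : Category) := {
  fob :> C -> D;
  fmor : forall A B : C, Hom A B -> Hom (fob A) (fob B);
  fmor_id : forall A : C, fmor A A (idm A) = idm (fob A);
  fmor_comp : forall (A B E : C) (g : Hom B E) (f : Hom A B),
      fmor A E (g ∘ f) = fmor B E g ∘ fmor A B f
}.
Arguments fob {_ _} _ _.
Arguments fmor {_ _} _ {_ _} _.

Definition bijective {X Y : Type} (f : X -> Y) : Prop :=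
  (forall x y, f x = f y -> x = y) /\ (forall y, exists x, f x = y).

(* A functor is an isomorphism of categories iff it is bijective on objects
   and on every hom-set (equivalently: it has a two-sided inverse functor). *)
Definition IsoOfCategories {C D : Category} (K : Functor C D) : Prop :=
  bijective (fob K) /\ forall A B : C, bijective (@fmor C D K A B).

Lemma sig_ext {T : Type} {P : T -> Prop} (x y : sig P) :
  proj1_sig x = proj1_sig y -> x = y.
Proof.
  destruct x as [x px], y as [y py]; simpl; intros ->; f_equal;
  apply proof_irrelevance.
Qed.

Record MonoidalData (C : Category) := {
  tens : C -> C -> C;
  tensm : forall A B A' B' : C, Hom A A' -> Hom B B' -> Hom (tens A B) (tens A' B');
  unitI : C;
  assoc : forall A B D : C, Hom (tens (tens A B) D) (tens A (tens B D));
  assoc_inv : forall A B D : C, Hom (tens A (tens B D)) (tens (tens A B) D);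
  lunit : forall A : C, Hom (tens unitI A) A;
  lunit_inv : forall A : C, Hom A (tens unitI A);
  runit : forall A : C, Hom (tens A unitI) A;
  runit_inv : forall A : C, Hom A (tens A unitI)
}.
Arguments tens {_} _ _ _.
Arguments tensm {_} _ {_ _ _ _} _ _.
Arguments unitI {_} _.
Arguments assoc {_} _ _ _ _.
Arguments assoc_inv {_} _ _ _ _.
Arguments lunit {_} _ _.
Arguments lunit_inv {_} _ _.
Arguments runit {_} _ _.
Arguments runit_inv {_} _ _.

Record IsMonoidal {C : Category} (m : MonoidalData C) : Prop := {
  tensm_id : forall A B : C, tensm m (idm A) (idm B) = idm (tens m A B);
  tensm_comp : forall (A B E A' B' E' : C) (f : Hom A B) (g : Hom B E)
      (f' : Hom A' B') (g' : Hom B' E'),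
      tensm m (g ∘ f) (g' ∘ f') = tensm m g g' ∘ tensm m f f';
  assoc_iso1 : forall A B D : C, assoc m A B D ∘ assoc_inv m A B D = idm _;
  assoc_iso2 : forall A B D : C, assoc_inv m A B D ∘ assoc m A B D = idm _;
  assoc_nat : forall (A B D A' B' D' : C) (f : Hom A A') (g : Hom B B') (h : Hom D D'),
      assoc m A' B' D' ∘ tensm m (tensm m f g) h = tensm m f (tensm m g h) ∘ assoc m A B D;
  lunit_iso1 : forall A : C, lunit m A ∘ lunit_inv m A = idm _;
  lunit_iso2 : forall A : C, lunit_inv m A ∘ lunit m A = idm _;
  lunit_nat : forall (A B : C) (f : Hom A B),
      lunit m B ∘ tensm m (idm (unitI m)) f = f ∘ lunit m A;
  runit_iso1 : forall A : C, runit m A ∘ runit_inv m A = idm _;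
  runit_iso2 : forall A : C, runit_inv m A ∘ runit m A = idm _;
  runit_nat : forall (A B : C) (f : Hom A B),
      runit m B ∘ tensm m f (idm (unitI m)) = f ∘ runit m A;
  pentagon : forall A B D E : C,
      assoc m A B (tens m D E) ∘ assoc m (tens m A B) D E
      = tensm m (idm A) (assoc m B D E) ∘ assoc m A (tens m B D) E
        ∘ tensm m (assoc m A B D) (idm E);
  triangle : forall A B : C,
      tensm m (idm A) (lunit m B) ∘ assoc m A (unitI m) B
      = tensm m (runit m A) (idm B)
}.

Record StrongMonadData {C : Category} (m : MonoidalData C) := {
  Mo : C -> C;
  Mm : forall A B : C, Hom A B -> Hom (Mo A) (Mo B);
  ret : forall A : C, Hom A (Mo A);
  join : forall A : C, Hom (Mo (Mo A)) (Mo A);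
  strength : forall A B : C, Hom (tens m (Mo A) B) (Mo (tens m A B))
}.
Arguments Mo {_ _} _ _.
Arguments Mm {_ _} _ {_ _} _.
Arguments ret {_ _} _ _.
Arguments join {_ _} _ _.
Arguments strength {_ _} _ _ _.

Record IsStrongMonad {C : Category} {m : MonoidalData C} (M : StrongMonadData m) : Prop := {
  Mm_id : forall A : C, Mm M (idm A) = idm (Mo M A);
  Mm_comp : forall (A B E : C) (f : Hom A B) (g : Hom B E), Mm M (g ∘ f) = Mm M g ∘ Mm M f;
  ret_nat : forall (A B : C) (f : Hom A B), Mm M f ∘ ret M A = ret M B ∘ f;
  join_nat : forall (A B : C) (f : Hom A B), Mm M f ∘ join M A = join M B ∘ Mm M (Mm M f);
  join_ret_l : forall A : C, join M A ∘ ret M (Mo M A) = idm _;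
  join_ret_r : forall A : C, join M A ∘ Mm M (ret M A) = idm _;
  join_assoc : forall A : C, join M A ∘ join M (Mo M A) = join M A ∘ Mm M (join M A);
  strength_nat : forall (A B A' B' : C) (f : Hom A A') (g : Hom B B'),
      Mm M (tensm m f g) ∘ strength M A B = strength M A' B' ∘ tensm m (Mm M f) g;
  strength_unit : forall A : C,
      Mm M (runit m A) ∘ strength M A (unitI m) = runit m (Mo M A);
  strength_assoc : forall A B D : C,
      Mm M (assoc m A B D) ∘ strength M (tens m A B) D ∘ tensm m (strength M A B) (idm D)
      = strength M A (tens m B D) ∘ assoc m (Mo M A) B D;
  strength_ret : forall A B : C,
      strength M A B ∘ tensm m (ret M A) (idm B) = ret M (tens m A B);
  strength_join : forall A B : C,
      strength M A B ∘ tensm m (join M A) (idm B)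
      = join M (tens m A B) ∘ Mm M (strength M A B) ∘ strength M (Mo M A) B
}.

Section Endo.
Context {C : Category} {m : MonoidalData C} (M : StrongMonadData m).

Definition GA (A X : C) : C := tens m A (Mo M X).
Definition GAm (A : C) {X Y : C} (f : Hom X Y) : Hom (GA A X) (GA A Y) :=
  tensm m (idm A) (Mm M f).
Definition GAstr (A X Y : C) : Hom (tens m (GA A X) Y) (GA A (tens m X Y)) :=
  tensm m (idm A) (strength M X Y) ∘ assoc m A (Mo M X) Y.

Definition IsFreeGAAlgebra (A X T : C) (cons : Hom (GA A T) T) (etaF : Hom X T) : Prop :=
  forall (D : C) (c : Hom (GA A D) D) (f : Hom X D),
    exists! h : Hom T D, h ∘ etaF = f /\ h ∘ cons = c ∘ GAm A h.

Definition IsStronglyGenerated (A X T : C) (cons : Hom (GA A T) T) (etaF : Hom X T) : Prop :=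
  forall (Y D : C) (c : Hom (GA A D) D) (f : Hom (tens m X Y) D),
    exists! h : Hom (tens m T Y) D,
      h ∘ tensm m etaF (idm Y) = f /\
      h ∘ tensm m cons (idm Y) = c ∘ GAm A h ∘ GAstr A T Y.

Definition AlgFreeMonadStronglyGenerated (A : C) : Prop :=
  forall X : C, exists (T : C) (cons : Hom (GA A T) T) (etaF : Hom X T),
    IsFreeGAAlgebra A X T cons etaF /\ IsStronglyGenerated A X T cons etaF.

End Endo.

Section EMMon.
Context {C : Category} {m : MonoidalData C} (M : StrongMonadData m).

Record EMMonoid := {
  emcar : C;
  emact : Hom (Mo M emcar) emcar;
  emmul : Hom (tens m emcar emcar) emcar;
  emunit : Hom (unitI m) emcar;
  em_alg_unit : emact ∘ ret M emcar = idm emcar;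
  em_alg_mult : emact ∘ Mm M emact = emact ∘ join M emcar;
  em_mon_assoc : emmul ∘ tensm m emmul (idm emcar)
                 = emmul ∘ tensm m (idm emcar) emmul ∘ assoc m emcar emcar emcar;
  em_mon_lunit : emmul ∘ tensm m emunit (idm emcar) = lunit m emcar;
  em_mon_runit : emmul ∘ tensm m (idm emcar) emunit = runit m emcar;
  em_compat : emmul ∘ tensm m emact (idm emcar)
              = emact ∘ Mm M emmul ∘ strength M emcar emcar
}.

Definition is_EMhom (A B : EMMonoid) (f : Hom (emcar A) (emcar B)) : Prop :=
  f ∘ emact A = emact B ∘ Mm M f /\
  f ∘ emmul A = emmul B ∘ tensm m f f /\
  f ∘ emunit A = emunit B.

Definition EMHom (A B : EMMonoid) : Type := { f : Hom (emcar A) (emcar B) | is_EMhom A B f }.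

Context (Hm : IsMonoidal m) (HM : IsStrongMonad M).

Lemma is_EMhom_id (A : EMMonoid) : is_EMhom A A (idm (emcar A)).
Proof.
  unfold is_EMhom; rewrite (Mm_id _ HM), (tensm_id _ Hm), !comp_idl, !comp_idr; auto.
Qed.

Lemma is_EMhom_comp (A B D : EMMonoid) (g : Hom (emcar B) (emcar D)) (f : Hom (emcar A) (emcar B)) :
  is_EMhom B D g -> is_EMhom A B f -> is_EMhom A D (g ∘ f).
Proof.
  intros [g1 [g2 g3]] [f1 [f2 f3]]; unfold is_EMhom; repeat split.
  - rewrite <- comp_assoc, f1, comp_assoc, g1, <- comp_assoc, <- (Mm_comp _ HM); reflexivity.
  - rewrite <- comp_assoc, f2, comp_assoc, g2, <- comp_assoc, <- (tensm_comp _ Hm); reflexivity.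
  - rewrite <- comp_assoc, f3, g3; reflexivity.
Qed.

Definition EMMon_cat : Category.
Proof.
  refine {| Ob := EMMonoid; Hom := EMHom;
            idm := fun A => exist _ (idm (emcar A)) (is_EMhom_id A);
            comp := fun A B D g f => exist _ (proj1_sig g ∘ proj1_sig f)
                                      (is_EMhom_comp _ _ _ _ _ (proj2_sig g) (proj2_sig f)) |}.
  - intros; apply sig_ext; apply comp_idl.
  - intros; apply sig_ext; apply comp_idr.
  - intros; apply sig_ext; apply comp_assoc.
Defined.

End EMMon.

Record LeftAdjointToU {C : Category} {m : MonoidalData C} (M : StrongMonadData m) := {
  Fob : C -> EMMonoid M;
  unitF : forall X : C, Hom X (emcar M (Fob X));
  ext : forall (X : C) (B : EMMonoid M), Hom X (emcar M B) -> EMHom M (Fob X) B;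
  ext_comm : forall (X : C) (B : EMMonoid M) (f : Hom X (emcar M B)),
      proj1_sig (ext X B f) ∘ unitF X = f;
  ext_uniq : forall (X : C) (B : EMMonoid M) (f : Hom X (emcar M B)) (g : EMHom M (Fob X) B),
      proj1_sig g ∘ unitF X = f -> g = ext X B f
}.
Arguments Fob {_ _ _} _ _.
Arguments unitF {_ _ _} _ _.
Arguments ext {_ _ _} _ {_ _} _.

(* Eilenberg--Moore category of a monad (given by its data + functor   *)
(* laws, which are all that is needed to form the category).           *)

Section EMcat.
Context {C : Category} (Tob : C -> C) (Tmap : forall A B : C, Hom A B -> Hom (Tob A) (Tob B))
        (Tunit : forall A : C, Hom A (Tob A)) (Tmult : forall A : C, Hom (Tob (Tob A)) (Tob A))
        (Tmap_id : forall A : C, Tmap A A (idm A) = idm (Tob A))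
        (Tmap_comp : forall (A B E : C) (f : Hom A B) (g : Hom B E),
            Tmap A E (g ∘ f) = Tmap B E g ∘ Tmap A B f).

Definition EMAlg : Type :=
  { X : C & { x : Hom (Tob X) X | x ∘ Tunit X = idm X /\ x ∘ Tmap _ _ x = x ∘ Tmult X } }.
Definition alg_car (a : EMAlg) : C := projT1 a.
Definition alg_str (a : EMAlg) : Hom (Tob (alg_car a)) (alg_car a) := proj1_sig (projT2 a).

Definition EMAlgHom (a b : EMAlg) : Type :=
  { h : Hom (alg_car a) (alg_car b) | h ∘ alg_str a = alg_str b ∘ Tmap _ _ h }.

Lemma EMAlgHom_id (a : EMAlg) : idm (alg_car a) ∘ alg_str a = alg_str a ∘ Tmap _ _ (idm (alg_car a)).
Proof. rewrite Tmap_id, comp_idl, comp_idr; reflexivity. Qed.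

Lemma EMAlgHom_comp (a b c : EMAlg) (g : EMAlgHom b c) (f : EMAlgHom a b) :
  (proj1_sig g ∘ proj1_sig f) ∘ alg_str a = alg_str c ∘ Tmap _ _ (proj1_sig g ∘ proj1_sig f).
Proof.
  destruct g as [g Hg], f as [f Hf]; simpl.
  rewrite <- comp_assoc, Hf, comp_assoc, Hg, <- comp_assoc, <- Tmap_comp; reflexivity.
Qed.

Definition EM_cat : Category.
Proof.
  refine {| Ob := EMAlg; Hom := EMAlgHom;
            idm := fun a => exist _ (idm (alg_car a)) (EMAlgHom_id a);
            comp := fun a b c g f => exist _ (proj1_sig g ∘ proj1_sig f) (EMAlgHom_comp a b c g f) |}.
  - intros; apply sig_ext; apply comp_idl.
  - intros; apply sig_ext; apply comp_idr.
  - intros; apply sig_ext; apply comp_assoc.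
Defined.

End EMcat.

Section Comparison.
Context {C : Category} {m : MonoidalData C} {M : StrongMonadData m}
        (Hm : IsMonoidal m) (HM : IsStrongMonad M) (F : LeftAdjointToU M).

Definition UFob (X : C) : C := emcar M (Fob F X).
Definition UFmap (X Y : C) (f : Hom X Y) : Hom (UFob X) (UFob Y) :=
  proj1_sig (ext F (unitF F Y ∘ f)).
Definition counit (B : EMMonoid M) : EMHom M (Fob F (emcar M B)) B := ext F (idm (emcar M B)).
Definition UFmult (X : C) : Hom (UFob (UFob X)) (UFob X) := proj1_sig (counit (Fob F X)).

Let EMC := EMMon_cat M Hm HM.

Lemma ext_uniq' (X : C) (B : EMMonoid M) (g1 g2 : EMHom M (Fob F X) B) :
  proj1_sig g1 ∘ unitF F X = proj1_sig g2 ∘ unitF F X -> proj1_sig g1 = proj1_sig g2.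
Proof.
  intro H. pose proof (ext_uniq _ F X B _ g1 H) as E1.
  pose proof (ext_uniq _ F X B _ g2 eq_refl) as E2.
  rewrite E1, <- E2; reflexivity.
Qed.

Lemma UFmap_id (X : C) : UFmap X X (idm X) = idm (UFob X).
Proof.
  unfold UFmap.
  change (idm (UFob X)) with (proj1_sig (@idm EMC (Fob F X))).
  apply ext_uniq'. rewrite ext_comm; simpl. rewrite comp_idl, comp_idr; reflexivity.
Qed.

Lemma UFmap_comp (A B E : C) (f : Hom A B) (g : Hom B E) :
  UFmap A E (g ∘ f) = UFmap B E g ∘ UFmap A B f.
Proof.
  unfold UFmap.
  change (proj1_sig (ext F (unitF F E ∘ g)) ∘ proj1_sig (ext F (unitF F B ∘ f)))
    with (proj1_sig (@comp EMC _ _ _ (ext F (unitF F E ∘ g)) (ext F (unitF F B ∘ f)))).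
  apply ext_uniq'. simpl. rewrite (ext_comm _ F A). rewrite <- (comp_assoc _ _ (unitF F A)). rewrite (ext_comm _ F A), (comp_assoc _ (unitF F B) f), (ext_comm _ F B).
  apply comp_assoc.
Qed.

Definition UF_EM_cat : Category := EM_cat UFob UFmap (unitF F) UFmult UFmap_id UFmap_comp.

Lemma counit_alg (B : EMMonoid M) :
  proj1_sig (counit B) ∘ unitF F (emcar M B) = idm (emcar M B) /\
  proj1_sig (counit B) ∘ UFmap _ _ (proj1_sig (counit B))
  = proj1_sig (counit B) ∘ UFmult (emcar M B).
Proof.
  split.
  - apply ext_comm.
  - unfold UFmap, UFmult.
    change (proj1_sig (counit B) ∘ proj1_sig (ext F (unitF F (emcar M B) ∘ proj1_sig (counit B))))
      with (proj1_sig (@comp EMC _ _ _ (counit B) (ext F (unitF F (emcar M B) ∘ proj1_sig (counit B))))).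
    change (proj1_sig (counit B) ∘ proj1_sig (counit (Fob F (emcar M B))))
      with (proj1_sig (@comp EMC _ _ _ (counit B) (counit (Fob F (emcar M B))))).
    apply ext_uniq'. simpl.
    rewrite <- !comp_assoc, ext_comm. unfold counit. rewrite ext_comm, comp_assoc, ext_comm.
    rewrite comp_idl, comp_idr; reflexivity.
Qed.

Definition comparison_ob (B : EMMonoid M) : @Ob UF_EM_cat :=
  existT _ (emcar M B) (exist _ (proj1_sig (counit B)) (counit_alg B)).

Lemma comparison_hom (B B' : EMMonoid M) (f : EMHom M B B') :
  proj1_sig f ∘ proj1_sig (counit B) = proj1_sig (counit B') ∘ UFmap _ _ (proj1_sig f).
Proof.
  unfold UFmap.
  change (proj1_sig f ∘ proj1_sig (counit B))
    with (proj1_sig (@comp EMC _ _ _ f (counit B))).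
  change (proj1_sig (counit B') ∘ proj1_sig (ext F (unitF F (emcar M B') ∘ proj1_sig f)))
    with (proj1_sig (@comp EMC _ _ _ (counit B') (ext F (unitF F (emcar M B') ∘ proj1_sig f)))).
  apply ext_uniq'. simpl.
  unfold counit. rewrite <- !comp_assoc.
  rewrite (ext_comm _ F (emcar M B) B), (ext_comm _ F (emcar M B) (Fob F (emcar M B'))), comp_idr.
  rewrite comp_assoc, (ext_comm _ F (emcar M B') B'), comp_idl; reflexivity.
Qed.

Definition comparison : Functor EMC UF_EM_cat.
Proof.
  refine {| fob := (comparison_ob : @Ob EMC -> @Ob UF_EM_cat);
            fmor := fun (B B' : EMMonoid M) (f : EMHom M B B') => exist _ (proj1_sig f) (comparison_hom B B' f) |}.
  - intros; apply sig_ext; reflexivity.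
  - intros; apply sig_ext; reflexivity.
Defined.

Definition StrictlyMonadic : Prop := IsoOfCategories comparison.

End Comparison.

(* Main.v *)
Require Import Defs.
From Stdlib Require Import ProofIrrelevance Eqdep.

Section Main.
Context {C : Category} {m : MonoidalData C} {M : StrongMonadData m}
        (Hm : IsMonoidal m) (HM : IsStrongMonad M) (F : LeftAdjointToU M).

Lemma cA {A B D E : C} (h : Hom D E) (g : Hom B D) (f : Hom A B) :
  (h ∘ g) ∘ f = h ∘ (g ∘ f).
Proof. symmetry; apply comp_assoc. Qed.

Lemma Mk {A B D Z : C} (g : Hom B D) (f : Hom A B) (k : Hom Z (Mo M A)) :
  Mm M g ∘ (Mm M f ∘ k) = Mm M (g ∘ f) ∘ k.
Proof. rewrite (Mm_comp _ HM), comp_assoc; reflexivity. Qed.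

Lemma Tk {A B D A' B' D' Z : C} (g : Hom B D) (f : Hom A B) (g' : Hom B' D') (f' : Hom A' B')
  (k : Hom Z (tens m A A')) :
  tensm m g g' ∘ (tensm m f f' ∘ k) = tensm m (g ∘ f) (g' ∘ f') ∘ k.
Proof. rewrite (tensm_comp _ Hm), comp_assoc; reflexivity. Qed.

Lemma Mc {A B D : C} (g : Hom B D) (f : Hom A B) :
  Mm M g ∘ Mm M f = Mm M (g ∘ f).
Proof. rewrite (Mm_comp _ HM); reflexivity. Qed.
Lemma Tc {A B D A' B' D' : C} (g : Hom B D) (f : Hom A B) (g' : Hom B' D') (f' : Hom A' B') :
  tensm m g g' ∘ tensm m f f' = tensm m (g ∘ f) (g' ∘ f').
Proof. rewrite (tensm_comp _ Hm); reflexivity. Qed.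

Ltac ra := repeat rewrite cA.

Definition Uf {X Y : C} (f : Hom X Y) : Hom (emcar M (Fob F X)) (emcar M (Fob F Y)) := UFmap F X Y f.
Notation eta X := (unitF F X).
Notation FF X := (Fob F X).

Lemma Uf_eta {X Y : C} (f : Hom X Y) : Uf f ∘ eta X = eta Y ∘ f.
Proof. apply ext_comm. Qed.

Lemma Uf_act {X Y : C} (f : Hom X Y) :
  Uf f ∘ emact M (FF X) = emact M (FF Y) ∘ Mm M (Uf f).
Proof. exact (proj1 (proj2_sig (ext F (unitF F Y ∘ f)))). Qed.
Lemma Uf_mul {X Y : C} (f : Hom X Y) :
  Uf f ∘ emmul M (FF X) = emmul M (FF Y) ∘ tensm m (Uf f) (Uf f).
Proof. exact (proj1 (proj2 (proj2_sig (ext F (unitF F Y ∘ f))))). Qed.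
Lemma Uf_unit {X Y : C} (f : Hom X Y) :
  Uf f ∘ emunit M (FF X) = emunit M (FF Y).
Proof. exact (proj2 (proj2 (proj2_sig (ext F (unitF F Y ∘ f))))). Qed.

Definition eps (B : EMMonoid M) : Hom (emcar M (FF (emcar M B))) (emcar M B) :=
  proj1_sig (counit F B).
Lemma eps_eta B : eps B ∘ eta (emcar M B) = idm _.
Proof. apply ext_comm. Qed.
Lemma eps_act B : eps B ∘ emact M (FF (emcar M B)) = emact M B ∘ Mm M (eps B).
Proof. exact (proj1 (proj2_sig (counit F B))). Qed.
Lemma eps_mul B : eps B ∘ emmul M (FF (emcar M B)) = emmul M B ∘ tensm m (eps B) (eps B).
Proof. exact (proj1 (proj2 (proj2_sig (counit F B)))). Qed.
Lemma eps_unit B : eps B ∘ emunit M (FF (emcar M B)) = emunit M B.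
Proof. exact (proj2 (proj2 (proj2_sig (counit F B)))). Qed.

Lemma recon_act B : emact M B = eps B ∘ (emact M (FF (emcar M B)) ∘ Mm M (eta _)).
Proof.
  rewrite comp_assoc, eps_act, cA, Mc, eps_eta, (Mm_id _ HM), comp_idr; reflexivity.
Qed.
Lemma recon_mul B : emmul M B = eps B ∘ (emmul M (FF (emcar M B)) ∘ tensm m (eta _) (eta _)).
Proof.
  rewrite comp_assoc, eps_mul, cA, Tc, eps_eta, (tensm_id _ Hm), comp_idr; reflexivity.
Qed.
Lemma recon_unit B : emunit M B = eps B ∘ emunit M (FF (emcar M B)).
Proof. rewrite eps_unit; reflexivity. Qed.


Section Alg.
Context (X : C) (x : Hom (emcar M (FF X)) X) (Hx1 : x ∘ eta X = idm X)
        (Hx2 : x ∘ UFmap F _ _ x = x ∘ UFmult F X).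

Let aF := emact M (FF X).
Let mF := emmul M (FF X).
Let uF := emunit M (FF X).

Lemma Hx2' : x ∘ Uf x = x ∘ eps (FF X).
Proof. exact Hx2. Qed.

Lemma G0 : x ∘ (aF ∘ Mm M (eta X ∘ x)) = x ∘ aF.
Proof.
  unfold aF. rewrite <- Uf_eta, <- Mc, (comp_assoc (emact M (FF X))). rewrite <- Uf_act.
  ra. rewrite (comp_assoc x (Uf x)), Hx2'. ra. rewrite (comp_assoc (eps _)), eps_act. ra.
  rewrite Mc, eps_eta, (Mm_id _ HM), comp_idr. reflexivity.
Qed.

Lemma Gk {Z} (k : Hom Z _) : x ∘ (aF ∘ (Mm M (eta X ∘ x) ∘ k)) = x ∘ (aF ∘ k).
Proof. rewrite (comp_assoc aF), (comp_assoc x), G0, cA; reflexivity. Qed.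

Lemma Gm0 : x ∘ (mF ∘ tensm m (eta X ∘ x) (eta X ∘ x)) = x ∘ mF.
Proof.
  unfold mF. rewrite <- !Uf_eta, <- Tc, (comp_assoc (emmul M (FF X))), <- Uf_mul.
  ra. rewrite (comp_assoc x (Uf x)), Hx2'. ra. rewrite (comp_assoc (eps _)), eps_mul. ra.
  rewrite Tc, eps_eta, (tensm_id _ Hm), comp_idr. reflexivity.
Qed.

Lemma Gmk {Z} (k : Hom Z _) : x ∘ (mF ∘ (tensm m (eta X ∘ x) (eta X ∘ x) ∘ k)) = x ∘ (mF ∘ k).
Proof. rewrite (comp_assoc mF), (comp_assoc x), Gm0, cA; reflexivity. Qed.

Lemma GF {Z W} (f : Hom Z _) (k : Hom W _) :
  x ∘ (aF ∘ (Mm M (eta X ∘ (x ∘ f)) ∘ k)) = x ∘ (aF ∘ (Mm M f ∘ k)).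
Proof. rewrite (comp_assoc (eta X) x f), <- Mc, cA, Gk; reflexivity. Qed.

Lemma GmL {Z W} (f : Hom Z _) (k : Hom W _) :
  x ∘ (mF ∘ (tensm m (eta X ∘ (x ∘ f)) (eta X) ∘ k)) = x ∘ (mF ∘ (tensm m f (eta X) ∘ k)).
Proof.
  assert (E : tensm m (eta X ∘ (x ∘ f)) (eta X)
              = tensm m (eta X ∘ x) (eta X ∘ x) ∘ tensm m f (eta X)).
  { rewrite Tc, !cA, Hx1, comp_idr; reflexivity. }
  rewrite E, cA, Gmk; reflexivity.
Qed.

Lemma GmR {Z W} (f : Hom Z _) (k : Hom W _) :
  x ∘ (mF ∘ (tensm m (eta X) (eta X ∘ (x ∘ f)) ∘ k)) = x ∘ (mF ∘ (tensm m (eta X) f ∘ k)).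
Proof.
  assert (E : tensm m (eta X) (eta X ∘ (x ∘ f))
              = tensm m (eta X ∘ x) (eta X ∘ x) ∘ tensm m (eta X) f).
  { rewrite Tc, !cA, Hx1, comp_idr; reflexivity. }
  rewrite E, cA, Gmk; reflexivity.
Qed.

Definition act : Hom (Mo M X) X := x ∘ (aF ∘ Mm M (eta X)).
Definition mul : Hom (tens m X X) X := x ∘ (mF ∘ tensm m (eta X) (eta X)).
Definition un : Hom (unitI m) X := x ∘ uF.

Lemma ax_alg_unit : act ∘ ret M X = idm X.
Proof.
  unfold act. ra. rewrite (ret_nat _ HM), (comp_assoc aF). unfold aF.
  rewrite (em_alg_unit M (FF X)), comp_idl, Hx1; reflexivity.
Qed.

Lemma ax_alg_mult : act ∘ Mm M act = act ∘ join M X.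
Proof.
  unfold act. ra. rewrite Mc, <- (comp_idr (Mm M (eta X ∘ _))), GF, comp_idr.
  rewrite (Mm_comp _ HM), (comp_assoc aF). unfold aF.
  rewrite (em_alg_mult M (FF X)). ra. rewrite <- (join_nat _ HM); reflexivity.
Qed.

Lemma ax_mon_assoc : mul ∘ tensm m mul (idm X) = mul ∘ tensm m (idm X) mul ∘ assoc m X X X.
Proof.
  unfold mul. ra. rewrite Tc, comp_idr, <- (comp_idr (tensm m (eta X ∘ _) _)), GmL, comp_idr.
  rewrite Tk, comp_idr, GmR.
  replace (tensm m (mF ∘ tensm m (eta X) (eta X)) (eta X))
    with (tensm m mF (idm _) ∘ tensm m (tensm m (eta X) (eta X)) (eta X))
    by (rewrite Tc, comp_idl; reflexivity).
  rewrite (comp_assoc mF). unfold mF. rewrite (em_mon_assoc M (FF X)). ra.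
  rewrite (assoc_nat _ Hm), Tk, comp_idl; reflexivity.
Qed.

Lemma ax_mon_lunit : mul ∘ tensm m un (idm X) = lunit m X.
Proof.
  unfold mul, un. ra. rewrite Tc, comp_idr, <- (comp_idr (tensm m (eta X ∘ _) _)), GmL, comp_idr.
  replace (tensm m uF (eta X)) with (tensm m uF (idm _) ∘ tensm m (idm _) (eta X))
    by (rewrite Tc, comp_idl, comp_idr; reflexivity).
  rewrite (comp_assoc mF). unfold mF, uF. rewrite (em_mon_lunit M (FF X)).
  rewrite (lunit_nat _ Hm), comp_assoc, Hx1, comp_idl; reflexivity.
Qed.

Lemma ax_mon_runit : mul ∘ tensm m (idm X) un = runit m X.
Proof.
  unfold mul, un. ra. rewrite Tc, comp_idr, <- (comp_idr (tensm m _ (eta X ∘ _))), GmR, comp_idr.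
  replace (tensm m (eta X) uF) with (tensm m (idm _) uF ∘ tensm m (eta X) (idm _))
    by (rewrite Tc, comp_idl, comp_idr; reflexivity).
  rewrite (comp_assoc mF). unfold mF, uF. rewrite (em_mon_runit M (FF X)).
  rewrite (runit_nat _ Hm), comp_assoc, Hx1, comp_idl; reflexivity.
Qed.

Lemma ax_compat : mul ∘ tensm m act (idm X) = act ∘ Mm M mul ∘ strength M X X.
Proof.
  unfold mul, act. ra. rewrite Tc, comp_idr, <- (comp_idr (tensm m (eta X ∘ _) _)), GmL, comp_idr.
  rewrite Mk, GF.
  replace (tensm m (aF ∘ Mm M (eta X)) (eta X))
    with (tensm m aF (idm _) ∘ tensm m (Mm M (eta X)) (eta X))
    by (rewrite Tc, comp_idl; reflexivity).
  rewrite (comp_assoc mF). unfold mF, aF. rewrite (em_compat M (FF X)). ra.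
  rewrite <- (strength_nat _ HM), Mk; reflexivity.
Qed.

Definition BX : EMMonoid M :=
  {| emcar := X; emact := act; emmul := mul; emunit := un;
     em_alg_unit := ax_alg_unit; em_alg_mult := ax_alg_mult;
     em_mon_assoc := ax_mon_assoc; em_mon_lunit := ax_mon_lunit;
     em_mon_runit := ax_mon_runit; em_compat := ax_compat |}.

Lemma x_hom : is_EMhom M (FF X) BX x.
Proof.
  unfold is_EMhom; simpl; repeat split.
  - unfold act. ra. rewrite Mc. symmetry; exact G0.
  - unfold mul. ra. rewrite Tc, <- (comp_idr (tensm m _ _)), Gmk, comp_idr; reflexivity.
Qed.

Lemma eps_BX : eps BX = x.
Proof.
  unfold eps, counit.
  pose proof (ext_uniq _ F X BX (idm X) (exist _ x x_hom) Hx1) as E.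
  change (proj1_sig (ext F (B:=BX) (idm X)) = x). rewrite <- E; reflexivity.
Qed.

End Alg.

Lemma hom_back (A B : EMMonoid M) (h : Hom (emcar M A) (emcar M B))
  (Hh : h ∘ eps A = eps B ∘ Uf h) : is_EMhom M A B h.
Proof.
  unfold is_EMhom. rewrite (recon_act A), (recon_act B), (recon_mul A), (recon_mul B),
    (recon_unit A), (recon_unit B). repeat split.
  - ra. rewrite (comp_assoc h), Hh. ra. rewrite (comp_assoc (Uf h)), Uf_act. ra.
    rewrite Mc, Uf_eta, <- Mc; reflexivity.
  - ra. rewrite (comp_assoc h), Hh. ra. rewrite (comp_assoc (Uf h)), Uf_mul. ra.
    rewrite Tc, Uf_eta, <- Tc; reflexivity.
  - rewrite (comp_assoc h), Hh. ra. rewrite Uf_unit; reflexivity.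
Qed.

Lemma ob_inj (B1 B2 : EMMonoid M) :
  comparison_ob Hm HM F B1 = comparison_ob Hm HM F B2 -> B1 = B2.
Proof.
  intro H.
  pose proof (f_equal (@projT1 _ _) H) as HX. simpl in HX.
  pose proof (recon_act B1) as Ra1. pose proof (recon_act B2) as Ra2.
  pose proof (recon_mul B1) as Rm1. pose proof (recon_mul B2) as Rm2.
  pose proof (recon_unit B1) as Ru1. pose proof (recon_unit B2) as Ru2.
  destruct B1 as [X1 a1 m1 u1 p1 p2 p3 p4 p5 p6], B2 as [X2 a2 m2 u2 q1 q2 q3 q4 q5 q6].
  simpl in HX. subst X2.
  unfold comparison_ob in H.
  apply Eqdep.EqdepTheory.inj_pair2 in H.
  pose proof (f_equal (@proj1_sig _ _) H) as He. simpl in He.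
  cbn [emact emmul emunit emcar] in Ra1, Ra2, Rm1, Rm2, Ru1, Ru2.
  unfold eps in Ra1, Ra2, Rm1, Rm2, Ru1, Ru2.
  assert (Ea : a1 = a2) by (rewrite Ra1, Ra2; f_equal; exact He).
  assert (Em : m1 = m2) by (rewrite Rm1, Rm2; f_equal; exact He).
  assert (Eu : u1 = u2) by (rewrite Ru1, Ru2; f_equal; exact He).
  clear Ra1 Ra2 Rm1 Rm2 Ru1 Ru2 H He.
  subst a2 m2 u2. f_equal; apply proof_irrelevance.
Qed.

End Main.

Lemma comparison_iso {C : Category} {m : MonoidalData C} {M : StrongMonadData m}
  (Hm : IsMonoidal m) (HM : IsStrongMonad M) (F : LeftAdjointToU M) :
  IsoOfCategories (comparison Hm HM F).
Proof.
  split.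
  - split.
    + intros B1 B2 H. apply (ob_inj Hm HM F). exact H.
    + intros [X [x [Hx1 Hx2]]].
      exists (BX Hm HM F X x Hx1 Hx2).
      simpl. unfold comparison_ob.
      generalize (counit_alg Hm HM F (BX Hm HM F X x Hx1 Hx2)).
      pose proof (eps_BX Hm HM F X x Hx1 Hx2) as E. unfold eps in E. simpl in E |- *.
      rewrite E. intro p. f_equal. f_equal. apply proof_irrelevance.
  - intros A B. split.
    + intros f g H. apply sig_ext.
      exact (f_equal (@proj1_sig _ _) H).
    + intros [h Hh].
      exists (exist _ h (hom_back Hm HM F A B h Hh)).
      apply sig_ext; reflexivity.
Qed.

Theorem theorem13 (C : Category) (m : MonoidalData C) (Hm : IsMonoidal m)
  (M : StrongMonadData m) (HM : IsStrongMonad M)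
  (Hfree : forall A : C, AlgFreeMonadStronglyGenerated M A)
  (F : LeftAdjointToU M) :
  StrictlyMonadic Hm HM F /\
  exists K : Functor (EMMon_cat M Hm HM) (UF_EM_cat Hm HM F), IsoOfCategories K.
Proof.
  split.
  - apply comparison_iso.
  - exists (comparison Hm HM F). apply comparison_iso.
Qed.
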